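(* Let $S$ be an abundant semigroup with a quasi-ideal adequate transversal $S^0$, let $R=\{x\in S:e_x=e_{\bar x}\}$, $L=\{x\in S:f_x=f_{\bar x}\}$ and $T=\{(x,a)\in L\times R:\bar x=\bar a\}$. If $(x,a)\in T$ then $xf_a=e_xa$.
   Context: For a semigroup $S$, $\mathcal{R}^\ast=\{(a,b): \text{for all } x,y\in S^1,\ xa=ya \iff xb=yb\}$ and $\mathcal{L}^\ast$ dually. $S$ is abundant if every $\mathcal{R}^\ast$-class and $\mathcal{L}^\ast$-class contains an idempotent; adequate if abundant with commuting idempotents. In an adequate semigroup $a^+,a^\ast$ are the unique idempotents $\mathcal{R}^\ast$-, resp. $\mathcal{L}^\ast$-related to $a$. A subsemigroup $U$ of abundant $S$ is a $\ast$-subsemigroup if $U$ is abundant and $\mathcal{L}^\ast_U=\mathcal{L}^\ast_S\cap(U\times U)$, $\mathcal{R}^\ast_U=\mathcal{R}^\ast_S\cap(U\times U)$. An adequate $\ast$-subsemigroup $S^0$ of abundant $S$ is an adequate transversal if for each $x\in S$ there is a unique $\bar x\in S^0$ and idempotents $e,f$ of $S$ with $x=e\bar xf$, $e\,\mathcal{L}\,\bar x^+$, $f\,\mathcal{R}\,\bar x^\ast$; these $e,f$ are unique and denoted $e_x,f_x$. It is a quasi-ideal adequate transversal if moreover $S^0SS^0\subseteq S^0$. *)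

(* Defs.v *)
Set Implicit Arguments.

Section Semigroup.
Variables (T : Type) (mul : T -> T -> T).

Definition associative_op : Prop :=
  forall a b c, mul a (mul b c) = mul (mul a b) c.

Definition idem (e : T) : Prop := mul e e = e.

(* elements of S^1 are represented by option T, None being the adjoined identity *)
Definition lmul1 (x : option T) (a : T) : T :=
  match x with None => a | Some x => mul x a end.
Definition rmul1 (a : T) (x : option T) : T :=
  match x with None => a | Some x => mul a x end.

Definition in1 (U : T -> Prop) (x : option T) : Prop :=
  match x with None => True | Some x => U x end.

Definition Rstar_in (U : T -> Prop) (a b : T) : Prop :=
  forall x y : option T, in1 U x -> in1 U y ->
    (lmul1 x a = lmul1 y a <-> lmul1 x b = lmul1 y b).
Definition Lstar_in (U : T -> Prop) (a b : T) : Prop :=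
  forall x y : option T, in1 U x -> in1 U y ->
    (rmul1 a x = rmul1 a y <-> rmul1 b x = rmul1 b y).

Definition allS : T -> Prop := fun _ => True.
Definition Rstar := Rstar_in allS.
Definition Lstar := Lstar_in allS.

Definition GreenL (a b : T) : Prop :=
  exists u v : option T, a = lmul1 u b /\ b = lmul1 v a.
Definition GreenR (a b : T) : Prop :=
  exists u v : option T, a = rmul1 b u /\ b = rmul1 a v.

Definition subsemigroup (U : T -> Prop) : Prop :=
  forall a b, U a -> U b -> U (mul a b).

Definition abundant_in (U : T -> Prop) : Prop :=
  forall a, U a ->
    (exists e, U e /\ idem e /\ Rstar_in U a e) /\
    (exists e, U e /\ idem e /\ Lstar_in U a e).

Definition abundant : Prop := abundant_in allS.

Definition adequate_in (U : T -> Prop) : Prop :=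
  abundant_in U /\
  forall e f, U e -> U f -> idem e -> idem f -> mul e f = mul f e.

Definition star_subsemigroup (U : T -> Prop) : Prop :=
  subsemigroup U /\ abundant_in U /\
  forall a b, U a -> U b ->
    (Lstar_in U a b <-> Lstar a b) /\ (Rstar_in U a b <-> Rstar a b).

Definition plus_in (U : T -> Prop) (a p : T) : Prop :=
  U p /\ idem p /\ Rstar_in U a p.
Definition ast_in (U : T -> Prop) (a q : T) : Prop :=
  U q /\ idem q /\ Lstar_in U a q.

Definition decomp (S0 : T -> Prop) (x xb e f : T) : Prop :=
  S0 xb /\ idem e /\ idem f /\ x = mul (mul e xb) f /\
  (exists p, plus_in S0 xb p /\ GreenL e p) /\
  (exists q, ast_in S0 xb q /\ GreenR f q).

Definition adequate_transversal (S0 : T -> Prop) : Prop :=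
  adequate_in S0 /\ star_subsemigroup S0 /\
  forall x, exists! xb, exists e f, decomp S0 x xb e f.

Definition quasi_ideal_adequate_transversal (S0 : T -> Prop) : Prop :=
  adequate_transversal S0 /\
  forall u s v, S0 u -> S0 v -> S0 (mul (mul u s) v).

End Semigroup.

(* Main.v *)
Require Import Defs.

Section H.
Variables (T : Type) (mul : T -> T -> T).
Hypothesis Hassoc : associative_op mul.

Lemma idem_rmul f w : idem mul f -> mul f (rmul1 mul f w) = rmul1 mul f w.
Proof. intros Hf; destruct w; simpl; [rewrite Hassoc|]; rewrite Hf; reflexivity. Qed.

Lemma rmul_assoc a b w : mul a (rmul1 mul b w) = rmul1 mul (mul a b) w.
Proof. destruct w; simpl; [apply Hassoc|reflexivity]. Qed.

Lemma greenR_absorb f g q : idem mul f -> idem mul g -> GreenR mul f q -> GreenR mul g q ->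
  mul f g = g.
Proof.
  intros Hf Hg [u1 [v1 [E1 E2]]] [u2 [v2 [E3 E4]]].
  assert (Hfq : mul f q = q) by (rewrite E2; apply idem_rmul; auto).
  rewrite E3, rmul_assoc, Hfq. reflexivity.
Qed.

Lemma ast_unique (S0 : T -> Prop) u q1 q2 :
  (forall e f, S0 e -> S0 f -> idem mul e -> idem mul f -> mul e f = mul f e) ->
  ast_in mul S0 u q1 -> ast_in mul S0 u q2 -> q1 = q2.
Proof.
  intros Hc [S1 [I1 L1]] [S2 [I2 L2]].
  assert (U1 : mul u q1 = u).
  { apply (L1 (Some q1) None); simpl; auto. }
  assert (U2 : mul u q2 = u).
  { apply (L2 (Some q2) None); simpl; auto. }
  assert (A : mul q2 q1 = q2).
  { apply (L2 (Some q1) None); simpl; auto. }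
  assert (B : mul q1 q2 = q1).
  { apply (L1 (Some q2) None); simpl; auto. }
  rewrite <- B, Hc; auto.
Qed.
End H.

Theorem lemma2p4 (T : Type) (mul : T -> T -> T)
  (Hassoc : associative_op mul)
  (Habund : abundant mul)
  (S0 : T -> Prop)
  (HS0 : quasi_ideal_adequate_transversal mul S0)
  (bar eF fF : T -> T)
  (Hdec : forall x, decomp mul S0 x (bar x) (eF x) (fF x))
  (x a : T)
  (HxL : fF x = fF (bar x))
  (HaR : eF a = eF (bar a))
  (Hxa : bar x = bar a) :
  mul x (fF a) = mul (eF x) a.
Proof.
  destruct HS0 as [[[Hab Hcomm] [_ Huniq]] _].
  set (u := bar x).
  assert (Su : S0 u) by (destruct (Hdec x) as [H _]; exact H).
  assert (Hbu : bar u = u).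
  { destruct (Hab u Su) as [[p [Sp [Ip Rp]]] [q [Sq [Iq Lq]]]].
    assert (Pu : mul p u = u) by (apply (Rp (Some p) None); simpl; auto).
    assert (Uq : mul u q = u) by (apply (Lq (Some q) None); simpl; auto).
    destruct (Huniq u) as [w [_ Hw]].
    assert (E1 : w = u).
    { apply Hw. exists p, q. repeat split; auto.
      - rewrite Pu, Uq; reflexivity.
      - exists p; split. split; auto. exists None, None; simpl; auto.
      - exists q; split. split; auto. exists None, None; simpl; auto. }
    assert (E2 : w = bar u). { apply Hw. exists (eF u), (fF u). apply Hdec. }
    congruence. }
  destruct (Hdec u) as [_ [Ieu [Ifu [Du [_ [q1 [A1 G1]]]]]]].
  rewrite Hbu in Du, A1.
  destruct (Hdec a) as [_ [Iea [Ifa [Da [_ [q2 [A2 G2]]]]]]].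
  fold u in Hxa; rewrite <- Hxa in Da, A2, HaR.
  destruct (Hdec x) as [_ [Iex [Ifx [Dx _]]]]. fold u in Dx.
  rewrite (@ast_unique T mul S0 u q1 q2 Hcomm A1 A2) in G1.
  assert (Hff : mul (fF u) (fF a) = fF a) by (eapply greenR_absorb; eauto).
  assert (Heu : mul (eF u) u = u).
  { assert (E : mul (eF u) (mul (mul (eF u) u) (fF u)) = mul (mul (eF u) u) (fF u))
      by (rewrite !Hassoc, Ieu; reflexivity).
    rewrite <- Du in E. exact E. }
  assert (Huf : mul u (fF u) = u).
  { assert (E : mul (mul (mul (eF u) u) (fF u)) (fF u) = mul (mul (eF u) u) (fF u))
      by (rewrite <- Hassoc, Ifu; reflexivity).
    rewrite <- Du in E. exact E. }
  transitivity (mul (mul (mul (eF x) u) (fF u)) (fF a)).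
  { f_equal. pose proof Dx as D. rewrite HxL in D. exact D. }
  transitivity (mul (eF x) (mul (mul (eF u) u) (fF a))).
  2:{ f_equal. rewrite <- HaR. symmetry. exact Da. }
  rewrite <- (Hassoc (mul (eF x) u)), Hff, Heu, Hassoc. reflexivity.
Qed.
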